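(* If $G$ is a $\chi_\rho$-critical graph, then $G$ is connected.
   Context: Graphs are finite and simple. A $k$-packing coloring of $G$ is a map $c:V(G)\to\{1,\ldots,k\}$ such that two distinct vertices $u,v$ with $c(u)=c(v)=i$ satisfy $d_G(u,v)>i$ (distance between vertices in different components is infinite); $\chi_\rho(G)$ is the smallest $k$ for which such a coloring exists. $G$ is $\chi_\rho$-critical if $\chi_\rho(H)<\chi_\rho(G)$ for every proper subgraph $H$ of $G$. *)

(* Defs.v *)
From mathcomp Require Import all_boot.
From mathcomp Require Import boolp.

Set Implicit Arguments.
Unset Strict Implicit.
Unset Printing Implicit Defensive.

Definition is_graph (T : finType) (V : {set T}) (E : rel T) : Prop :=
  [/\ symmetric E, irreflexive E & forall u v, E u v -> (u \in V) && (v \in V)].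

Definition is_subgraph (T : finType) (W : {set T}) (F : rel T)
    (V : {set T}) (E : rel T) : Prop :=
  is_graph W F /\ W \subset V /\ (forall u v, F u v -> E u v).

Definition is_proper_subgraph (T : finType) (W : {set T}) (F : rel T)
    (V : {set T}) (E : rel T) : Prop :=
  is_subgraph W F V E /\ (W != V \/ exists u v, E u v && ~~ F u v).

(* there is a walk of length at most n from u to v using edges of E,
   i.e. d(u,v) <= n (infinite if no walk exists at all). *)
Definition walk_le (T : finType) (E : rel T) (n : nat) (u v : T) : Prop :=
  exists p : seq T, [/\ size p <= n, path E u p & last u p = v].

Definition packing_coloring (T : finType) (V : {set T}) (E : rel T)
    (k : nat) (c : T -> nat) : Prop :=
  (forall v, v \in V -> 1 <= c v <= k) /\
  (forall u v, u \in V -> v \in V -> u != v -> c u = c v -> ~ walk_le E (c u) u v).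

Definition packing_colorable (T : finType) (V : {set T}) (E : rel T) (k : nat) :=
  exists c : T -> nat, packing_coloring V E k c.

Lemma packing_colorable_ex (T : finType) (V : {set T}) (E : rel T) :
  exists k, `[< packing_colorable V E k >].
Proof.
exists #|T|; apply/asboolP.
exists (fun v => (enum_rank v).+1); split.
  by move=> v _; rewrite /= ltn_ord.
by move=> u v _ _ /eqP uv [] /val_inj /enum_rank_inj.
Qed.

Definition chi_rho (T : finType) (V : {set T}) (E : rel T) : nat :=
  ex_minn (packing_colorable_ex V E).

Definition chi_rho_critical (T : finType) (V : {set T}) (E : rel T) : Prop :=
  forall (W : {set T}) (F : rel T),
    is_proper_subgraph W F V E -> chi_rho W F < chi_rho V E.

Definition connected_graph (T : finType) (V : {set T}) (E : rel T) : Prop :=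
  forall u v, u \in V -> v \in V -> exists p : seq T, path E u p /\ last u p = v.

(* Main.v *)
Require Import Defs.
From mathcomp Require Import all_boot.
From mathcomp Require Import boolp.
Set Implicit Arguments.
Unset Strict Implicit.

Lemma chi_spec (T : finType) (V : {set T}) (E : rel T) :
  packing_colorable V E (chi_rho V E) /\
  (forall k, packing_colorable V E k -> chi_rho V E <= k).
Proof.
rewrite /chi_rho; case: ex_minnP => m /asboolP Hm Hmin; split => //.
by move=> k Hk; apply: Hmin; apply/asboolP.
Qed.

Definition restr (T : finType) (E : rel T) (S : {set T}) : rel T :=
  fun x y => [&& E x y, x \in S & y \in S].

Lemma path_restr (T : finType) (E : rel T) (S : {set T}) :
  (forall x y, x \in S -> E x y -> y \in S) ->
  forall p x, x \in S -> path E x p -> path (restr E S) x p.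
Proof.
move=> cl; elim=> [|y p IH] x xS //= /andP [exy pp].
have yS := cl _ _ xS exy.
by rewrite /restr exy xS yS /=; apply: IH.
Qed.

Lemma restr_subgraph (T : finType) (V : {set T}) (E : rel T) (S : {set T}) :
  is_graph V E -> S \subset V -> S != V -> is_proper_subgraph S (restr E S) V E.
Proof.
move=> [sy ir ins] sub neq; split; last by left.
split; last (split; first by []).
  2: by move=> u v /and3P [].
split.
- by move=> x y; rewrite /restr sy; case: (x \in S); case: (y \in S); rewrite ?andbF.
- by move=> x; rewrite /restr ir.
- by move=> u v /and3P [_ -> ->].
Qed.

Theorem lemma2p4 (T : finType) (V : {set T}) (E : rel T) :
  is_graph V E -> chi_rho_critical V E -> connected_graph V E.
Proof.
move=> G crit u v uV vV.
case cuv: (connect E u v).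
  by case/connectP: cuv => p pp ->; exists p.
exfalso.
have [sy ir ins] := G.
set C := [set w | connect E u w].
set D := V :\: C.
have uC : u \in C by rewrite inE connect0.
have vC : v \notin C by rewrite inE cuv.
have CV : C \subset V.
  apply/subsetP => w; rewrite inE => /connectP [p pp ->].
  elim/last_ind: p pp => [|p y _] //=.
  rewrite rcons_path last_rcons => /andP [_ e].
  by case/andP: (ins _ _ e).
have clC : forall x y, x \in C -> E x y -> y \in C.
  move=> x y; rewrite !inE => cx exy.
  by apply: (connect_trans cx); apply: connect1.
have clD : forall x y, x \in D -> E x y -> y \in D.
  move=> x y; rewrite !inE => /andP [nx _] exy.
  case/andP: (ins _ _ exy) => _ ->; rewrite andbT.
  apply: contra nx => cy; apply: (connect_trans cy); apply: connect1.
  by rewrite sy.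
have DV : D \subset V by apply: subsetDl.
have CnV : C != V by apply: contraNneq vC => ->.
have DnV : D != V by apply/eqP => eDV; move: uV; rewrite -eDV inE uC.
have hC := crit _ _ (restr_subgraph G CV CnV).
have hD := crit _ _ (restr_subgraph G DV DnV).
have [[c1 [b1 w1]] _] := chi_spec C (restr E C).
have [[c2 [b2 w2]] _] := chi_spec D (restr E D).
have [_ minG] := chi_spec V E.
set k := maxn (chi_rho C (restr E C)) (chi_rho D (restr E D)).
have : chi_rho V E <= k.
  apply: minG; exists (fun x => if x \in C then c1 x else c2 x); split.
    move=> x xV; case: ifP => xC.
      case/andP: (b1 _ xC) => -> h; exact: (leq_trans h (leq_maxl _ _)).
    have xD : x \in D by rewrite inE xC.
    case/andP: (b2 _ xD) => -> h; exact: (leq_trans h (leq_maxr _ _)).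
  move=> x y xV yV nxy.
  have walkC : forall n, x \in C -> walk_le E n x y -> y \in C.
    move=> n xC [p [_ pp <-]].
    elim/last_ind: p pp => [|p z IH] //=.
    rewrite rcons_path last_rcons => /andP [pp e].
    exact: (clC _ _ (IH pp) e).
  have walkD : forall n, x \in D -> walk_le E n x y -> y \in D.
    move=> n xD [p [_ pp <-]].
    elim/last_ind: p pp => [|p z IH] //=.
    rewrite rcons_path last_rcons => /andP [pp e].
    exact: (clD _ _ (IH pp) e).
  case: ifP => xC; case: ifP => yC.
  - move=> e W; apply: (w1 _ _ xC yC nxy e).
    case: W => p [sp pp lp]; exists p; split => //.
    exact: path_restr.
  - by move=> _ W; move: (walkC _ xC W); rewrite yC.
  - have xD : x \in D by rewrite inE xC.
    by move=> _ W; move: (walkD _ xD W); rewrite inE yC.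
  - have xD : x \in D by rewrite inE xC.
    have yD : y \in D by rewrite inE yC.
    move=> e W; apply: (w2 _ _ xD yD nxy e).
    case: W => p [sp pp lp]; exists p; split => //.
    exact: path_restr.
have hk : k < chi_rho V E by rewrite /k gtn_max hC hD.
by move=> H; move: (leq_ltn_trans H hk); rewrite ltnn.
Qed.
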